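(* Let $d,N\ge1$ and $1\le r\le d^N$. Work in the quotient $V=\mathbb{R}^{d\times N}/L$, where $L$ is the lineality space of the normal fans below, and let $\overline{\mathsf{T}}$ be the image of $\mathsf{T}_{d,N}$ in $V$. Let $\Sigma^r$ denote the normal fan (in $V$) of the $r$-lineup polytope of the vertex set of $\Pi_{d,N}$, and let $\mathcal{T}^r=\{C\cap\overline{\mathsf{T}}:C\in\Sigma^r\}$ be its test fan. Then every ray (one-dimensional cone) of $\mathcal{T}^r$ is a ray of $\Sigma^{d^N}$, the normal fan of the sweep polytope $\mathcal{L}(\Pi_{d,N})$. (It need not be a ray of $\Sigma^r$.)
   Context: $\Pi_{d,N}=(\Delta_{d-1})^N\subset\mathbb{R}^{d\times N}$ with vertices $(\mathbf{e}_{i_1},\dots,\mathbf{e}_{i_N})$, $i_j\in[d]$. $\mathsf{T}_{d,N}=\{\mathbf{x}: 0\le x_{1,j}\le\dots\le x_{d,j}\ \forall j\in[N]\}$. For a point configuration $\mathbf{A}$ of size $n$, $1\le r\le n$, and weights $w_1>\dots>w_r>0$ with $\sum w_i=1$, the $r$-lineup polytope is $\operatorname{conv}\{\sum_{i=1}^r w_i\mathbf{v}_i:(\mathbf{v}_1,\dots,\mathbf{v}_r)\text{ an ordered list of distinct points of }\mathbf{A}\}$; its normal fan does not depend on the weights, and for $r=n$ it is the sweep polytope $\mathcal{L}(\mathbf{A})$. $L$ is the orthogonal complement of the affine hull of $\Pi_{d,N}$, spanned by the vectors $\sum_{i=1}^d\mathbf{e}_{i,j}$, $j\in[N]$; all these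 normal fans contain $L$ in every cone, and are considered as fans in $V$. The fans satisfy the refinement chain $\Sigma^1\succeq\Sigma^2\succeq\dots\succeq\Sigma^{d^N}$. *)

(* Defs.v *)
From HB Require Import structures.
From mathcomp Require Import all_boot all_order all_algebra.
Set Implicit Arguments. Unset Strict Implicit. Unset Printing Implicit Defensive.
Import Order.TTheory GRing.Theory Num.Theory.
Local Open Scope ring_scope.

Definition pset (T : Type) := T -> Prop.

Section Defs.
Variables (R : realFieldType) (d N : nat).
Local Notation M := 'M[R]_(d, N).

Definition pairing (c x : M) : R := \sum_(i < d) \sum_(j < N) c i j * x i j.

(* the vertex (e_{g 1}, ..., e_{g N}) of Pi_{d,N} = (Delta_{d-1})^N *)
Definition pi_vertex (g : {ffun 'I_N -> 'I_d}) : M :=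
  \matrix_(i < d, j < N) (g j == i)%:R.

Definition lineup_weights (r : nat) (w : 'I_r -> R) : Prop :=
  [/\ forall i j : 'I_r, (i < j)%N -> w j < w i,
      forall i, 0 < w i
    & \sum_(i < r) w i = 1].

Definition lineup_index (r : nat) : {set {ffun 'I_r -> {ffun 'I_N -> 'I_d}}} :=
  [set s : {ffun 'I_r -> {ffun 'I_N -> 'I_d}} | injectiveb s].

Definition lineup_point (r : nat) (w : 'I_r -> R)
  (s : {ffun 'I_r -> {ffun 'I_N -> 'I_d}}) : M :=
  \sum_(k < r) w k *: pi_vertex (s k).

Definition optimal (I : finType) (A : {set I}) (p : I -> M) (c : M) : {set I} :=
  [set i in A | [forall j in A, pairing c (p j) <= pairing c (p i)]].

(* Normal fan of P = conv { p i | i in A }: the normal cones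
   N_F = { c | F subset of argmax_P c } of the nonempty faces F = argmax_P c0;
   since max_P c = max_{i in A} c(p i), "F subset argmax_P c" is equivalent to
   "every point p i with i in optimal c0 is optimal for c", i.e.
   optimal c0 \subset optimal c. *)
Definition normal_fan (I : finType) (A : {set I}) (p : I -> M) : pset (pset M) :=
  fun C => exists c0 : M, C = (fun c => optimal A p c0 \subset optimal A p c).

Definition lineup_fan (r : nat) (w : 'I_r -> R) : pset (pset M) :=
  normal_fan (lineup_index r) (lineup_point w).

Definition lineality : pset M :=
  fun x => exists a : 'I_N -> R, forall i j, x i j = a j.

Definition Tdn : pset M :=
  fun x => forall j : 'I_N, forall i i' : 'I_d, (i <= i')%N ->
    0 <= x i j /\ x i j <= x i' j.

(* preimage in R^{d x N} of the image T-bar of T_{d,N} in V = R^{d x N}/L *)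
Definition Tbar_lift : pset M :=
  fun x => exists t l, Tdn t /\ lineality l /\ x = t + l.

Definition setI_p (A B : pset M) : pset M := fun x => A x /\ B x.

Definition span_dim (S : pset M) (k : nat) : Prop :=
  exists s : seq M, [/\ forall x, x \in s -> S x, free s, size s = k
                      & forall x, S x -> x \in <<s>>%VS].

End Defs.

(* Main.v *)
Require Import Defs.
From mathcomp Require Import all_boot all_order all_algebra.
From mathcomp Require Import reals.
From mathcomp Require Import fingroup perm ring lra.
From Stdlib Require Import FunctionalExtensionality PropExtensionality.
Set Implicit Arguments. Unset Strict Implicit. Unset Printing Implicit Defensive.
Import Order.TTheory GRing.Theory Num.Theory.
Local Open Scope ring_scope.

Section Comb.
Variables (R : realFieldType) (T : finType) (r : nat) (w : 'I_r -> R).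
Hypothesis wdec : forall i j : 'I_r, (i < j)%N -> w j < w i.
Hypothesis wpos : forall i, 0 < w i.

Definition phi (F : T -> R) (s : {ffun 'I_r -> T}) := \sum_(k < r) w k * F (s k).
Definition isopt (F : T -> R) (s : {ffun 'I_r -> T}) := injective s /\
  forall t : {ffun 'I_r -> T}, injective t -> phi F t <= phi F s.
Definition Qc (F : T -> R) (s : {ffun 'I_r -> T}) := forall (a : 'I_r) g,
  (forall k : 'I_r, (k <= a)%N -> s k != g) -> F g <= F (s a).

Lemma swap_phi F (s : {ffun 'I_r -> T}) (a b : 'I_r) : a != b ->
  phi F [ffun k => s (tperm a b k)] = phi F s - (w a - w b) * (F (s a) - F (s b)).
Proof.
move=> ab; rewrite /phi (bigD1 a) //= (bigD1 b) 1?eq_sym //=.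
rewrite [in RHS](bigD1 a) //= [in RHS](bigD1 b) 1?eq_sym //=.
rewrite !ffunE tpermL tpermR.
rewrite (eq_bigr (fun k => w k * F (s k))); last first.
  by move=> k /andP[ka kb]; rewrite ffunE tpermD // eq_sym.
ring.
Qed.

Lemma repl_phi F (s : {ffun 'I_r -> T}) (a : 'I_r) g :
  phi F [ffun k => if k == a then g else s k] = phi F s + w a * (F g - F (s a)).
Proof.
rewrite /phi (bigD1 a) //= [in RHS](bigD1 a) //= ffunE eqxx.
rewrite (eq_bigr (fun k => w k * F (s k))); last first.
  by move=> k ka; rewrite ffunE (negbTE ka).
ring.
Qed.

Lemma nec F (s : {ffun 'I_r -> T}) : isopt F s -> Qc F s.
Proof.
move=> [inj opt] a g H.
case: (pickP (fun k => s k == g)) => [b /eqP sb | nb].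
  have ab : (a < b)%N.
    by rewrite ltnNge; apply/negP => /H; rewrite sb eqxx.
  have abn : a != b by rewrite neq_ltn ab.
  have := opt [ffun k => s (tperm a b k)].
  rewrite swap_phi //.
  have injt : injective [ffun k => s (tperm a b k)].
    by move=> x y; rewrite !ffunE => /inj /perm_inj.
  move=> /(_ injt); rewrite -sb.
  have wab := wdec ab.
  rewrite gerBl => h.
  have : 0 < w a - w b by rewrite subr_gt0.
  move=> p; rewrite -subr_ge0; rewrite -(pmulr_rge0 _ p); exact: h.
have injt : injective [ffun k => if k == a then g else s k].
  move=> x y; rewrite !ffunE.
  case: (x =P a) => [->|xa]; case: (y =P a) => [->|ya] //.
  - by move=> e; have := nb y; rewrite e eqxx.
  - by move=> e; have := nb x; rewrite e eqxx.
  by move/inj.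
have := opt _ injt; rewrite repl_phi gerDl => h.
rewrite -subr_le0 -(pmulr_rle0 _ (wpos a)); exact: h.
Qed.

Lemma abel_aux (W A : nat -> R) n :
  (forall k, (k.+1 < n.+1)%N -> W k.+1 <= W k) ->
  (forall m, (m < n.+1)%N -> 0 <= \sum_(k < m.+1) A k) ->
  W n * \sum_(k < n.+1) A k <= \sum_(k < n.+1) W k * A k.
Proof.
elim: n => [|n IH] Wd Pp.
  by rewrite !big_ord_recr !big_ord0 /= !add0r.
rewrite [in X in _ <= X]big_ord_recr /= [in X in _ * X]big_ord_recr /=.
have h1 := IH (fun k hk => Wd k (ltnW hk)) (fun m hm => Pp m (ltnW hm)).
have h2 : W n.+1 * \sum_(k < n.+1) A k <= W n * \sum_(k < n.+1) A k.
  by apply: ler_wpM2r; [apply: Pp | apply: Wd].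
rewrite mulrDr; apply: lerD => //; exact: le_trans h2 h1.
Qed.

Lemma abel (W A : nat -> R) n :
  (forall k, (k.+1 < n)%N -> W k.+1 <= W k) ->
  (forall k, (k < n)%N -> 0 <= W k) ->
  (forall m, (m < n)%N -> 0 <= \sum_(k < m.+1) A k) ->
  0 <= \sum_(k < n) W k * A k.
Proof.
case: n => [|n] Wd Wp Pp; first by rewrite big_ord0.
apply: le_trans (abel_aux Wd Pp); apply: mulr_ge0; [exact: Wp | exact: Pp].
Qed.

Lemma set_lemma (F : T -> R) (S U : {set T}) : #|S| = #|U| ->
  (forall g h, g \notin S -> h \in S -> F g <= F h) ->
  \sum_(g in U) F g <= \sum_(g in S) F g.
Proof.
move=> card H.
rewrite (big_setID S) [in X in _ <= X](big_setID U) /= setIC lerD2l.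
have cD : #|U :\: S| = #|S :\: U| by rewrite !cardsD setIC card.
set n := #|U :\: S| in cD.
have key : n%:R * \sum_(g in U :\: S) F g <= n%:R * \sum_(g in S :\: U) F g.
  rewrite {1}cD !mulr_sumr.
  rewrite (eq_bigr (fun g => \sum_(h in S :\: U) F g)); last first.
    by move=> g _; rewrite sumr_const mulr_natl.
  rewrite [in X in _ <= X](eq_bigr (fun h => \sum_(g in U :\: S) F h)); last first.
    by move=> g _; rewrite /n sumr_const mulr_natl.
  rewrite [in X in _ <= X]exchange_big /=.
  apply: ler_sum => g; rewrite inE => /andP[gS _].
  apply: ler_sum => h; rewrite inE => /andP[_ hS].
  exact: H.
case: (posnP n) => n0.
  move: (n0); rewrite /n => /eqP; rewrite cards_eq0 => /eqP ->.
  move: n0; rewrite cD => /eqP; rewrite cards_eq0 => /eqP ->.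
  by rewrite !big_set0.
by rewrite ler_pM2l ?ltr0n in key.
Qed.


Lemma prefix F (s t : {ffun 'I_r -> T}) (m : nat) : injective s -> injective t ->
  Qc F s ->
  \sum_(k : 'I_r | (k < m.+1)%N) F (t k) <= \sum_(k : 'I_r | (k < m.+1)%N) F (s k).
Proof.
move=> sinj tinj Q.
set Am := [set k : 'I_r | (k < m.+1)%N].
have e u : \sum_(k : 'I_r | (k < m.+1)%N) F (u k) = \sum_(k in Am) F (u k).
  by apply: eq_bigl => k; rewrite inE.
rewrite !e -!(big_imset F (in2W tinj)) -!(big_imset F (in2W sinj)) /=.
apply: set_lemma; first by rewrite !card_imset.
move=> g h gS /imsetP[k]; rewrite inE => km ->.
apply: Q => k' k'k; apply: contraNneq gS => <-.
by apply: imset_f; rewrite inE; apply: leq_ltn_trans km.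
Qed.

Lemma suf F (s : {ffun 'I_r -> T}) : injective s -> Qc F s -> isopt F s.
Proof.
move=> sinj Q; split => // t tinj.
pose W n := if (insub n : option 'I_r) is Some k then w k else 0.
pose A n := if (insub n : option 'I_r) is Some k then F (s k) - F (t k) else 0.
have iv (k : 'I_r) : insub (val k) = Some k by apply: valK.
have iS n (hn : (n < r)%N) : insub n = Some (Ordinal hn).
  by rewrite -[n]/(val (Ordinal hn)) iv.
have : 0 <= \sum_(k < r) W k * A k.
  apply: abel.
  - move=> k hk; have hk0 : (k < r)%N := ltnW hk.
    rewrite /W (iS _ hk) (iS _ hk0); apply/ltW/wdec => /=; exact: ltnSn.
  - by move=> k hk; rewrite /W (iS _ hk); apply/ltW.
  move=> m hm.
  rewrite -(big_mkord xpredT) (big_nat_widen _ _ _ _ _ (hm : (m.+1 <= r)%N)).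
  rewrite big_mkord.
  rewrite (eq_bigr (fun k : 'I_r => F (s k) - F (t k))); last first.
    by move=> k _; rewrite /A iv.
  by rewrite sumrB subr_ge0; apply: prefix.
rewrite (eq_bigr (fun k : 'I_r => w k * (F (s k) - F (t k)))); last first.
  by move=> k _; rewrite /W /A iv.
move=> h; rewrite /phi -subr_ge0 -sumrB.
by under eq_bigr => k _ do rewrite -mulrBr.
Qed.


Lemma nec_pair F (s : {ffun 'I_r -> T}) (p q : 'I_r) : isopt F s -> (p < q)%N ->
  F (s q) <= F (s p).
Proof.
move=> o pq; have [sinj _] := o; apply: (nec o) => k kp.
apply/eqP => /sinj e; move: kp; rewrite e leqNgt pq.
done.
Qed.

End Comb.

Section S.
Variables (R : realFieldType) (d N : nat).
Local Notation M := 'M[R]_(d, N).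
Local Notation G := {ffun 'I_N -> 'I_d}.

Definition vl (c : M) (g : G) : R := \sum_(j < N) c (g j) j.

Lemma pairing_pi (c : M) g : pairing c (@pi_vertex R d N g) = vl c g.
Proof.
rewrite /pairing /vl exchange_big /=; apply: eq_bigr => j _.
rewrite (bigD1 (g j)) //= !mxE eqxx mulr1 big1 ?addr0 // => i /negbTE ne.
by rewrite mxE eq_sym ne mulr0.
Qed.

Lemma pairing_lp r (w : 'I_r -> R) (c : M) s :
  pairing c (lineup_point w s) = \sum_(k < r) w k * vl c (s k).
Proof.
rewrite /pairing /lineup_point.
under eq_bigr => i _ do under eq_bigr => j _ do rewrite summxE mulr_sumr.
rewrite exchange_big /=.
under eq_bigr => i _ do rewrite exchange_big /=.
rewrite exchange_big /=. apply: eq_bigr => k _.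
rewrite -pairing_pi /pairing exchange_big mulr_sumr; apply: eq_bigr => i _.
rewrite mulr_sumr; apply: eq_bigr => j _; rewrite mxE; ring.
Qed.

Lemma optE r (w : 'I_r -> R) (c : M) (s : {ffun 'I_r -> G}) :
  (s \in optimal (lineup_index d N r) (lineup_point w) c) <-> isopt w (vl c) s.
Proof.
rewrite !inE; split.
  case/andP => /injectiveP si /forallP H; split => // t ti.
  have := H t; rewrite inE => /implyP; rewrite !pairing_lp; apply.
  exact/injectiveP.
case=> si H; apply/andP; split; first exact/injectiveP.
apply/forallP => t; rewrite inE; apply/implyP => /injectiveP ti.
rewrite !pairing_lp; exact: H.
Qed.

Lemma refine r (w : 'I_r -> R) (x c : M) : lineup_weights w ->
  (forall g g', vl x g' <= vl x g -> vl c g' <= vl c g) ->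
  optimal (lineup_index d N r) (lineup_point w) x \subset
  optimal (lineup_index d N r) (lineup_point w) c.
Proof.
case=> wd wp _ P; apply/subsetP => s /optE o; apply/optE.
have [si _] := o; apply: suf => //.
move=> a g H; apply: P; exact: (nec wd wp o).
Qed.

Definition colinc (x : M) := forall j (i i' : 'I_d), (i <= i')%N -> x i j <= x i' j.

Lemma Tbar_colinc x : Tbar_lift x -> colinc x.
Proof.
move=> [t [l [Tt [[a La] ->]]]] j i i' ii; rewrite !mxE !La lerD2r.
by case: (Tt j i i' ii).
Qed.

Lemma colinc_Tbar (hd : (0 < d)%N) x : colinc x -> Tbar_lift x.
Proof.
move=> cx; pose i0 := Ordinal hd.
pose l := \matrix_(i < d, j < N) x i0 j.
exists (x - l), l; split; last split.
- move=> j i i' ii; rewrite !mxE; split; first by rewrite subr_ge0; apply: cx.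
  by rewrite lerD2r; apply: cx.
- by exists (fun j => x i0 j) => i j; rewrite mxE.
- by rewrite subrK.
Qed.

Lemma vl_lin (l : M) : lineality l -> forall g g', vl l g = vl l g'.
Proof.
by case=> a La g g'; rewrite /vl; apply: eq_bigr => j _; rewrite !La.
Qed.

Lemma vl_comb mu (x l : M) g : vl (mu *: x + l) g = mu * vl x g + vl l g.
Proof.
rewrite /vl mulr_sumr -big_split /=; apply: eq_bigr => j _; rewrite !mxE.
done.
Qed.

Lemma ray_opt r (w : 'I_r -> R) mu (x l : M) : 0 <= mu -> lineality l ->
  optimal (lineup_index d N r) (lineup_point w) x \subset
  optimal (lineup_index d N r) (lineup_point w) (mu *: x + l).
Proof.
move=> mu0 ll; apply/subsetP => s /optE [si o]; apply/optE; split => // t ti.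
have e u : phi w (vl (mu *: x + l)) u = mu * phi w (vl x) u + phi w (vl l) u.
  rewrite /phi mulr_sumr -big_split /=; apply: eq_bigr => k _.
  rewrite vl_comb; ring.
rewrite !e.
have -> : phi w (vl l) t = phi w (vl l) s.
  by apply: eq_bigr => k _; rewrite (vl_lin ll (t k) (s k)).
by rewrite lerD2r; apply: ler_wpM2l => //; apply: o.
Qed.

Lemma vl_upd (c : M) (i0 : 'I_d) j i :
  vl c [ffun j' => if j' == j then i else i0] = c i j + \sum_(j' < N | j' != j) c i0 j'.
Proof.
rewrite /vl (bigD1 j) //= ffunE eqxx; congr (_ + _).
by apply: eq_bigr => j' /negbTE h; rewrite ffunE h.
Qed.

Lemma colinc_from_P (hd : (0 < d)%N) (x c : M) : colinc x ->
  (forall g g', vl x g' <= vl x g -> vl c g' <= vl c g) -> colinc c.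
Proof.
move=> cx P j i i' ii; pose i0 := Ordinal hd.
have := P [ffun j' => if j' == j then i' else i0] [ffun j' => if j' == j then i else i0].
by rewrite !vl_upd !lerD2r; apply; apply: cx.
Qed.

Lemma PfromSweep (w' : 'I_(d ^ N) -> R) (x c : M) : lineup_weights w' ->
  optimal (lineup_index d N (d ^ N)) (lineup_point w') x \subset
  optimal (lineup_index d N (d ^ N)) (lineup_point w') c ->
  forall g g', vl x g' <= vl x g -> vl c g' <= vl c g.
Proof.
case=> wd wp _ sub g g' xgg.
have E : #|G| = (d ^ N)%N by rewrite card_ffun !card_ord.
pose s0 := [ffun k : 'I_(d ^ N) => enum_val (cast_ord (esym E) k)].
have s0in : s0 \in lineup_index d N (d ^ N).
  rewrite inE; apply/injectiveP => a b; rewrite !ffunE.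
  by move/enum_val_inj/cast_ord_inj.
pose F := fun s => pairing x (lineup_point w' s).
case: (@arg_maxP _ _ _ _ [pred s | s \in lineup_index d N (d ^ N)] F s0in).
move=> s1 s1in s1max.
have o1 : isopt w' (vl x) s1.
  apply/optE; rewrite inE; apply/andP; split; first exact: s1in.
  apply/forallP => t; apply/implyP => tin.
  exact: s1max.
have [s1i _] := o1.
have onto y : exists a, s1 a = y.
  have /codomP[a ->] : y \in codom s1.
    by apply: inj_card_onto => //; rewrite card_ord E.
  by exists a.
have [-> | gg] := eqVneq g g'; first by [].
have [a sa] := onto g; have [b sb] := onto g'.
have ab : a != b by apply: contraNneq gg => e; rewrite -sa -sb e.
suff [s [p [q [os [pq [sp sq]]]]]] : exists s (p q : 'I_(d ^ N)), isopt w' (vl x) s /\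
    (p < q)%N /\ s p = g /\ s q = g'.
  have : s \in optimal (lineup_index d N (d ^ N)) (lineup_point w') c.
    by apply: (subsetP sub); apply/optE.
  move/optE => oc; rewrite -sp -sq; have := nec_pair wd wp oc pq; apply.
case: (ltngtP a b) => [lab | lba | eab]; last by move/eqP: ab; case; apply: val_inj.
  by exists s1, a, b.
exists [ffun k => s1 (tperm a b k)], b, a; split; last by rewrite !ffunE tpermR tpermL.
split.
  by move=> u v; rewrite !ffunE => /s1i /perm_inj.
move=> t ti; rewrite (@swap_phi _ _ _ w' (vl x) s1 a b ab) sa sb; apply: le_trans (proj2 o1 t ti) _.
rewrite -subr_ge0 addrAC subrr add0r oppr_ge0; apply: mulr_le0_ge0; last by rewrite subr_ge0.
by rewrite subr_le0; apply/ltW/wd.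
Qed.

Lemma lin_opt r (w : 'I_r -> R) (l : M) (s : {ffun 'I_r -> G}) : lineality l -> injective s ->
  isopt w (vl l) s.
Proof.
move=> ll si; split => // t ti.
suff -> : phi w (vl l) t = phi w (vl l) s by [].
apply: eq_bigr => k _.
by rewrite (vl_lin ll (t k) (s k)).
Qed.

Lemma lin_span (sL : seq M) : (forall y, y \in sL -> lineality y) ->
  forall y, y \in <<sL>>%VS -> lineality y.
Proof.
move=> sLin y yin; rewrite (@coord_span _ _ _ (in_tuple sL) y yin).
apply: (big_ind (@lineality R d N)).
- by exists (fun _ => 0) => i j; rewrite mxE.
- by move=> u v [a ua] [b vb]; exists (fun j => a j + b j) => i j; rewrite mxE ua vb.
move=> i _; have [a ya] := sLin _ (mem_nth 0 (ltn_ord i)).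
by exists (fun j => coord (in_tuple sL) i y * a j) => i' j; rewrite mxE ya.
Qed.
End S.

Theorem proposition2p3 (R : realType) (d N r : nat)
    (w : 'I_r -> R) (w' : 'I_(d ^ N) -> R) :
  (1 <= d)%N -> (1 <= N)%N -> (1 <= r <= d ^ N)%N ->
  lineup_weights w -> lineup_weights w' ->
  forall C : pset 'M[R]_(d, N),
    lineup_fan w C ->
    (* C \cap T-bar is a one-dimensional cone of V = R^{dxN}/L *)
    (exists k, span_dim (@lineality R d N) k /\
               span_dim (setI_p C (@Tbar_lift R d N)) k.+1) ->
    exists C' : pset 'M[R]_(d, N),
      lineup_fan w' C' /\ C' = setI_p C (@Tbar_lift R d N).
Proof.
move=> hd hN /andP[hr1 hr2] hw hw' C [c0 ->].
move=> [k [[sL [sLin fL szL spL]] [s [sin fs szs sps]]]].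
have linC (l : 'M[R]_(d, N)) : lineality l ->
    optimal (lineup_index d N r) (lineup_point w) c0 \subset
    optimal (lineup_index d N r) (lineup_point w) l.
  move=> ll; apply/subsetP => t /optE [ti _]; apply/optE; exact: lin_opt.
have linT (l : 'M[R]_(d, N)) : lineality l -> Tbar_lift l.
  move=> ll; exists 0, l; split; last split => //; last by rewrite add0r.
  by move=> j i i' _; rewrite !mxE.
have LS := lin_span sLin.
have sLs : (<<sL>> <= <<s>>)%VS.
  by apply/span_subvP => y /sLin ly; apply: sps; split; [apply: linC | apply: linT].
have : ~~ all (fun y => y \in <<sL>>%VS) s.
  apply/negP => /allP al.
  have : (<<s>> <= <<sL>>)%VS by apply/span_subvP.
  by move/dimvS; rewrite (eqP fs) (eqP fL) szs szL ltnn.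
rewrite -has_predC => /hasP[x xs /= xn].
have [xC xT] := sin x xs.
have fx : free (x :: sL) by rewrite free_cons xn fL.
have subx : (<<x :: sL>> <= <<s>>)%VS.
  apply/span_subvP => y; rewrite inE => /orP[/eqP -> | ys].
    exact: memv_span.
  by apply: (subvP sLs); apply: memv_span.
have spx : <<x :: sL>>%VS = <<s>>%VS.
  apply/eqP; rewrite -(dimv_leqif_eq subx).2 (eqP fs) (eqP fx) /= szs szL.
  done.
have xnL : ~ lineality x by move/spL => h; rewrite h in xn.
have cx := Tbar_colinc xT.
exists (fun c => optimal (lineup_index d N (d ^ N)) (lineup_point w') x \subset
                 optimal (lineup_index d N (d ^ N)) (lineup_point w') c).
split; first by exists x.
apply: functional_extensionality => c; apply: propositional_extensionality.
split.
  move=> sub; have P := PfromSweep hw' sub.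
  have cc := colinc_from_P hd cx P.
  split. 2: exact: (@colinc_Tbar R d N hd c cc).
  exact: subset_trans xC (refine hw P).
case=> cC cT.
have : c \in <<s>>%VS by apply: sps.
rewrite -spx span_cons => /memv_addP[u /vlineP[mu ->] [v vin ec]].
have lv := LS v vin.
have [mneg|mpos] := ltP mu 0; first last.
  by rewrite ec; exact: ray_opt.
exfalso; apply: xnL; pose i0 := Ordinal hd.
exists (fun j => x i0 j) => i j; apply: le_anti; apply/andP; split; last first.
  by apply: cx.
have ct : colinc c := Tbar_colinc cT.
have := @ct j i0 i (leq0n _).
rewrite ec; case: lv => a la; rewrite !mxE !la lerD2r ler_nM2l //.
Qed.
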